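(* Let $d\ge1$, $m\in\mathbb{N}$ ($m\ge1$), and let $A_0,A_1\in\mathbb{R}^{d\times d}$ be constant matrices. Let $G:\mathbb{Z}_0^\infty\to\mathbb{R}^{d\times d}$ satisfy $A_1G(u)=G(u)A_1$ for all $u\in\mathbb{Z}_0^\infty$, and let $\Psi:\mathbb{Z}_{-m}^0\to\mathbb{R}^{d\times d}$ satisfy $A_1\Psi(u)=\Psi(u)A_1$ for all $u\in\mathbb{Z}_{-m}^0$. Let $Z$ be the discrete function defined in the context. Then \[ X(u)=Z(u)\Psi(-m)+\sum_{r=-m+1}^{0}Z(u-m-r)\,\Delta\Psi(r-1)+\sum_{r=1}^{u}Z(u-m-r)\,G(r-1),\qquad u\in\mathbb{Z}_{-m}^{\infty} \] (an empty sum being $\Theta$), is the unique solution of \[ \Delta X(u)=A_0X(u-m)+X(u-m)A_1+G(u),\ \ u\in\mathbb{Z}_0^{\infty},\qquad X(u)=\Psi(u),\ \ u\in\mathbb{Z}_{-m}^{0}. \]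
   Context: $\Theta$ and $I$ denote the $d\times d$ zero and identity matrices; $\mathbb{Z}_a^b=\{a,a+1,\dots,b\}$ (with $\mathbb{Z}_a^\infty=\{a,a+1,\dots\}$ and $\mathbb{Z}_{-\infty}^b=\{\dots,b-1,b\}$); $\Delta X(u)=X(u+1)-X(u)$. For integers $a$ and $r\ge0$, $\binom{a}{r}=a(a-1)\cdots(a-r+1)/r!$. Define matrices $Q_{r+1}(rm)$, $r=0,1,2,\dots$, by $Q_1(0)=I$ and $Q_{r+1}(rm)=A_0Q_r((r-1)m)+Q_r((r-1)m)A_1$ for $r\ge1$. Define $Z(u)=\Theta$ for $u\in\mathbb{Z}_{-\infty}^{-m-1}$, $Z(u)=I$ for $u\in\mathbb{Z}_{-m}^{0}$, and for each integer $n\ge1$ and $u\in\mathbb{Z}_{(n-1)(m+1)+1}^{n(m+1)}$, \[ Z(u)=\sum_{r=0}^{n}\binom{u-(r-1)m}{r}Q_{r+1}(rm). \] *)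

(* Defs.v *)
From HB Require Import structures.
From mathcomp Require Import all_boot all_order all_algebra.
From mathcomp Require Import reals.
Set Implicit Arguments. Unset Strict Implicit. Unset Printing Implicit Defensive.
Import Order.TTheory GRing.Theory Num.Theory.
Local Open Scope ring_scope.

Section Defs.
Variables (R : realType) (d : nat).

Definition binz (a : int) (r : nat) : R :=
  ((\prod_(i < r) (a - i%:Z))%:~R) / (r`!)%:R.

(* Qmat r = Q_{r+1}(r m) *)
Fixpoint Qmat (A0 A1 : 'M[R]_d) (r : nat) : 'M[R]_d :=
  match r with
  | 0%N => 1%:M
  | r'.+1 => A0 *m Qmat A0 A1 r' + Qmat A0 A1 r' *m A1
  end.

(* Z(u): Theta for u <= -m-1, I for -m <= u <= 0, and for n >= 1 and
   (n-1)(m+1)+1 <= u <= n(m+1): sum_{r=0}^n binom(u-(r-1)m, r) Q_{r+1}(rm).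
   For u >= 1, n = (u-1) div (m+1) + 1. *)
Definition Zmat (A0 A1 : 'M[R]_d) (m : nat) (u : int) : 'M[R]_d :=
  if u < - (m%:Z) then 0
  else if u <= 0 then 1%:M
  else let n := ((absz u).-1 %/ m.+1).+1 in
    \sum_(0 <= r < n.+1) binz (u - (r%:Z - 1) * m%:Z) r *: Qmat A0 A1 r.

Definition DeltaM (X : int -> 'M[R]_d) (u : int) : 'M[R]_d := X (u + 1) - X u.

(* the explicit formula; the sum over r = -m+1..0 is indexed by k = r + m - 1,
   the sum over r = 1..u is empty when u <= 0 *)
Definition Xsol (A0 A1 : 'M[R]_d) (m : nat) (G Psi : int -> 'M[R]_d) (u : int) : 'M[R]_d :=
  Zmat A0 A1 m u *m Psi (- (m%:Z))
  + \sum_(0 <= k < m)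
      (let r := k%:Z - m%:Z + 1 in
       Zmat A0 A1 m (u - m%:Z - r) *m DeltaM Psi (r - 1))
  + \sum_(1 <= k < (absz u).+1 | 0 < u)
      Zmat A0 A1 m (u - m%:Z - k%:Z) *m G (k%:Z - 1).

Definition solves_ivp (A0 A1 : 'M[R]_d) (m : nat) (G Psi X : int -> 'M[R]_d) : Prop :=
  (forall u : int, 0 <= u ->
     DeltaM X u = A0 *m X (u - m%:Z) + X (u - m%:Z) *m A1 + G u)
  /\ (forall u : int, - (m%:Z) <= u <= 0 -> X u = Psi u).

End Defs.

(* Main.v *)
Require Import Defs.
From HB Require Import structures.
From mathcomp Require Import all_boot all_order all_algebra.
From mathcomp Require Import reals.
From mathcomp Require Import ring lra zify.
Import Order.TTheory GRing.Theory Num.Theory.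
Local Open Scope ring_scope.
Set Implicit Arguments. Unset Strict Implicit.

Lemma prod_ffact (k r : nat) : \prod_(i < r) (k%:Z - i%:Z) = (k ^_ r)%:Z.
Proof.
elim: r => [|r IH]; first by rewrite big_ord0 ffactn0.
rewrite big_ord_recr /= IH ffactnSr.
case: (leqP r k) => hrk; first by rewrite PoszM subzn.
by rewrite ffact_small // mul0r mul0n.
Qed.

Lemma binzE (R : realType) (k r : nat) : binz R k%:Z r = ('C(k, r))%:R.
Proof.
rewrite /binz prod_ffact -bin_ffact -pmulrn natrM mulfK //.
by rewrite pnatr_eq0 -lt0n fact_gt0.
Qed.

Definition Sz (R : realType) (d : nat) (A0 A1 : 'M[R]_d) (m N w : nat) : 'M[R]_d :=
  \sum_(r < N) ('C(w - r * m, r))%:R *: Qmat A0 A1 r.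

Lemma Sz_N (R : realType) (d : nat) (A0 A1 : 'M[R]_d) (m N w : nat) :
  (w < N)%N -> Sz A0 A1 m N w = Sz A0 A1 m w.+1 w.
Proof.
move=> hN; rewrite /Sz -!(big_mkord xpredT (fun r => ('C(w - r * m, r))%:R *: Qmat A0 A1 r)).
rewrite (big_cat_nat _ (n:=w.+1)) //= [X in _ + X]big1_seq ?addr0 //.
move=> r /andP[_]; rewrite mem_index_iota => /andP[hr _].
rewrite bin_small ?scale0r //; lia.
Qed.

Lemma Zmat_Sz (R : realType) (d : nat) (A0 A1 : 'M[R]_d) (m w : nat) :
  Zmat A0 A1 m (w%:Z - m%:Z) = Sz A0 A1 m w.+1 w.
Proof.
rewrite /Zmat.
have -> : (w%:Z - m%:Z < - m%:Z) = false by apply/negbTE; rewrite -leNgt; lia.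
case: ifP => hw.
  have hwm : (w <= m)%N by lia.
  rewrite /Sz big_ord_recl /= subn0 bin0 scale1r big1 ?addr0 // => i _.
  rewrite bin_small ?scale0r // /bump /= add1n; have : (m <= i.+1 * m)%N by rewrite leq_pmull. lia.
set n := ((absz _).-1 %/ m.+1).+1.
have hu : (w - m)%N = absz (w%:Z - m%:Z) by lia.
have h1 : (n * m.+1 <= w)%N.
  rewrite /n mulSn; have := leq_trunc_div (absz (w%:Z - m%:Z)).-1 m.+1. lia.
have h2 : (w < n.+1 * m.+1)%N.
  rewrite /n; have := ltn_ceil (absz (w%:Z - m%:Z)).-1 (ltn0Sn m). lia.
rewrite -(@Sz_N _ _ A0 A1 m (n.+1 * m.+1) w) //.
rewrite /Sz -!(big_mkord xpredT (fun r => ('C(w - r * m, r))%:R *: Qmat A0 A1 r)).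
rewrite [RHS](big_cat_nat _ (n:=n.+1)) //=; last by rewrite mulnS; lia.
rewrite [X in _ = _ + X]big1_seq ?addr0; last first.
  move=> r /andP[_]; rewrite mem_index_iota => /andP[hr _].
  rewrite bin_small ?scale0r //; nia.
apply: eq_big_nat => r /andP[_ hr].
have -> : w%:Z - m%:Z - (r%:Z - 1) * m%:Z = (w - r * m)%N%:Z.
  have : (r * m <= w)%N by nia.
  lia.
by rewrite binzE.
Qed.

Lemma bin_id (m w s : nat) : (m <= w)%N ->
  'C(w.+1 - s.+1 * m, s.+1) = ('C(w - m - s * m, s) + 'C(w - s.+1 * m, s.+1))%N.
Proof.
move=> hmw; rewrite -subnDA -mulSn.
case: (leqP (s.+1 * m) w) => hp.
  by rewrite subSn // binS addnC.
have -> : (w.+1 - s.+1 * m = 0)%N by lia.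
have -> : (w - s.+1 * m = 0)%N by lia.
rewrite !bin0n; case: s hp => [|s] hp //; lia.
Qed.

Lemma Sz_rec (R : realType) (d : nat) (A0 A1 : 'M[R]_d) (m w : nat) : (m <= w)%N ->
  Sz A0 A1 m w.+2 w.+1 - Sz A0 A1 m w.+1 w =
  A0 *m Sz A0 A1 m (w - m).+1 (w - m) + Sz A0 A1 m (w - m).+1 (w - m) *m A1.
Proof.
move=> hmw.
rewrite -(@Sz_N _ _ A0 A1 m w.+2 w) // -(@Sz_N _ _ A0 A1 m w.+1 (w - m)); last lia.
rewrite /Sz -sumrB big_ord_recl /= !subn0 !bin0 subrr add0r.
rewrite mulmx_sumr mulmx_suml -big_split /=.
apply: eq_bigr => s _.
rewrite -scalerBl -scalemxAr -scalemxAl -scalerDr /bump /= add1n.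
by rewrite bin_id // natrD addrK.
Qed.

Lemma Z_lt (R : realType) (d : nat) (A0 A1 : 'M[R]_d) (m : nat) (u : int) :
  u < - m%:Z -> Zmat A0 A1 m u = 0.
Proof. by move=> h; rewrite /Zmat h. Qed.

Lemma Z_init (R : realType) (d : nat) (A0 A1 : 'M[R]_d) (m : nat) (u : int) :
  - m%:Z <= u <= 0 -> Zmat A0 A1 m u = 1%:M.
Proof.
move=> /andP[h1 h2]; rewrite /Zmat h2.
by have -> : (u < - m%:Z) = false by apply/negbTE; rewrite -leNgt.
Qed.

Lemma ZD (R : realType) (d : nat) (A0 A1 : 'M[R]_d) (m : nat) (v : int) :
  - m%:Z <= v ->
  Zmat A0 A1 m (v + 1) - Zmat A0 A1 m v =
  A0 *m Zmat A0 A1 m (v - m%:Z) + Zmat A0 A1 m (v - m%:Z) *m A1.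
Proof.
move=> hv.
case: (leP 0 v) => h0.
  case: v hv h0 => [n|n] hv h0; last by [].
  have key := @Sz_rec _ _ A0 A1 m (n + m) (leq_addl _ _).
  move: key; rewrite -!Zmat_Sz.
  have -> : ((n + m).+1)%:Z - m%:Z = n%:Z + 1 by lia.
  have -> : (n + m)%N%:Z - m%:Z = n%:Z by lia.
  have -> : (n + m - m)%N%:Z - m%:Z = n%:Z - m%:Z by lia.
  by [].
rewrite (@Z_lt _ _ A0 A1 m (v - m%:Z)); last lia.
rewrite mulmx0 mul0mx addr0 !Z_init ?subrr //; apply/andP; split; lia.
Qed.

Definition Ysol (R : realType) (d : nat) (A0 A1 : 'M[R]_d) (m : nat)
  (G Psi : int -> 'M[R]_d) (N : nat) (u : int) : 'M[R]_d :=
  Zmat A0 A1 m u *m Psi (- m%:Z)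
  + \sum_(0 <= k < m) Zmat A0 A1 m (u - m%:Z - (k%:Z - m%:Z + 1)) *m DeltaM Psi (k%:Z - m%:Z + 1 - 1)
  + \sum_(1 <= k < N.+1) Zmat A0 A1 m (u - m%:Z - k%:Z) *m G (k%:Z - 1).

Lemma XY (R : realType) (d : nat) (A0 A1 : 'M[R]_d) (m : nat)
  (G Psi : int -> 'M[R]_d) (N : nat) (u : int) : u <= N%:Z ->
  Xsol A0 A1 m G Psi u = Ysol A0 A1 m G Psi N u.
Proof.
move=> hu; rewrite /Xsol /Ysol; congr (_ + _).
case: u hu => [p|p] hu; last first.
  rewrite !big1 // => k; rewrite ?Z_lt ?mul0mx //; lia.
case: p hu => [|p] hu.
  rewrite big_geq // big1_seq // => k /andP[_]; rewrite mem_index_iota => hk.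
  rewrite Z_lt ?mul0mx //; lia.
have -> : (0 < (p.+1)%:Z) = true by [].
rewrite [RHS](big_cat_nat _ (n:=p.+2)) //=; try lia.
rewrite [X in _ = _ + X]big1_seq ?addr0 // => k /andP[_]; rewrite mem_index_iota => hk.
rewrite Z_lt ?mul0mx //; lia.
Qed.

Lemma rearr (V : zmodType) (a1 a2 b1 b2 c1 c2 x y z g : V) :
  a1 - a2 = x -> b1 - b2 = y -> c1 - c2 = z + g ->
  (a1 + b1 + c1) - (a2 + b2 + c2) = x + y + z + g.
Proof.
move=> <- <- h; rewrite -(addrA _ z g) -h.
by rewrite !opprD addrACA [X in X + _]addrACA !addrA.
Qed.

Lemma L3 (R : realType) (d : nat) (A0 A1 a b c : 'M[R]_d) :
  A0 *m (a + b + c) + (a + b + c) *m A1 =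
  (A0 *m a + a *m A1) + (A0 *m b + b *m A1) + (A0 *m c + c *m A1).
Proof.
by rewrite !mulmxDr !mulmxDl addrACA [X in X + _ = _]addrACA.
Qed.

Lemma Lsum (R : realType) (d : nat) (A0 A1 : 'M[R]_d) (a b : nat) (F : nat -> 'M[R]_d) :
  A0 *m (\sum_(a <= k < b) F k) + (\sum_(a <= k < b) F k) *m A1 =
  \sum_(a <= k < b) (A0 *m F k + F k *m A1).
Proof. by rewrite mulmx_sumr mulmx_suml -big_split. Qed.

Theorem theorem9 (R : realType) (d : nat) (hd : (0 < d)%N) (m : nat) (hm : (0 < m)%N)
  (A0 A1 : 'M[R]_d) (G Psi : int -> 'M[R]_d)
  (hG : forall u : int, 0 <= u -> A1 *m G u = G u *m A1)
  (hPsi : forall u : int, - (m%:Z) <= u <= 0 -> A1 *m Psi u = Psi u *m A1) :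
  solves_ivp A0 A1 m G Psi (Xsol A0 A1 m G Psi)
  /\ (forall X : int -> 'M[R]_d, solves_ivp A0 A1 m G Psi X ->
        forall u : int, - (m%:Z) <= u -> X u = Xsol A0 A1 m G Psi u).
Proof.
have Lop_mul : forall M P : 'M[R]_d, P *m A1 = A1 *m P ->
   A0 *m (M *m P) + (M *m P) *m A1 = (A0 *m M + M *m A1) *m P.
  by move=> M P hP; rewrite mulmxDl mulmxA -(mulmxA M) hP mulmxA.
have ZDP : forall (v : int) (P : 'M[R]_d), - m%:Z <= v -> P *m A1 = A1 *m P ->
  Zmat A0 A1 m (v + 1) *m P - Zmat A0 A1 m v *m P =
  A0 *m (Zmat A0 A1 m (v - m%:Z) *m P) + (Zmat A0 A1 m (v - m%:Z) *m P) *m A1.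
  by move=> v P hv hP; rewrite -mulmxBl ZD // Lop_mul.
have hD : forall k : nat, (k < m)%N ->
    DeltaM Psi (k%:Z - m%:Z + 1 - 1) *m A1 = A1 *m DeltaM Psi (k%:Z - m%:Z + 1 - 1).
  move=> k hk; rewrite /DeltaM mulmxBl mulmxBr !hPsi //; apply/andP; split; lia.
have step : forall n : nat,
  Ysol A0 A1 m G Psi n.+1 (n%:Z + 1) - Ysol A0 A1 m G Psi n n%:Z =
  A0 *m Ysol A0 A1 m G Psi n (n%:Z - m%:Z) + Ysol A0 A1 m G Psi n (n%:Z - m%:Z) *m A1
  + G n%:Z.
  move=> n; rewrite /Ysol L3 (big_nat_recr n.+1) //=.
  apply: rearr.
  - rewrite ZDP; [by [] | lia | rewrite hPsi //; apply/andP; split; lia].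
  - rewrite -sumrB Lsum; apply: eq_big_nat => k /andP[_ hk].
    have -> : n%:Z + 1 - m%:Z - (k%:Z - m%:Z + 1) = (n%:Z - m%:Z - (k%:Z - m%:Z + 1)) + 1 by lia.
    rewrite ZDP ?hD //; last lia.
    have -> : n%:Z - m%:Z - (k%:Z - m%:Z + 1) - m%:Z = n%:Z - m%:Z - m%:Z - (k%:Z - m%:Z + 1) by lia.
    by [].
  - rewrite addrAC -sumrB Lsum; congr (_ + _).
      apply: eq_big_nat => k /andP[hk1 hk].
      have -> : n%:Z + 1 - m%:Z - k%:Z = (n%:Z - m%:Z - k%:Z) + 1 by lia.
      rewrite ZDP; [|lia|by rewrite hG //; lia].
      have -> : n%:Z - m%:Z - k%:Z - m%:Z = n%:Z - m%:Z - m%:Z - k%:Z by lia.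
      by [].
    rewrite Z_init ?mul1mx; last (apply/andP; split; lia).
    by congr G; lia.
have Xs : forall n : nat, DeltaM (Xsol A0 A1 m G Psi) n%:Z =
    A0 *m Xsol A0 A1 m G Psi (n%:Z - m%:Z) + Xsol A0 A1 m G Psi (n%:Z - m%:Z) *m A1 + G n%:Z.
  move=> n; rewrite /DeltaM (@XY R d A0 A1 m G Psi n.+1 (n%:Z + 1)); last lia.
  rewrite (@XY R d A0 A1 m G Psi n n%:Z) // (@XY R d A0 A1 m G Psi n (n%:Z - m%:Z)); last lia.
  exact: step.
have init : forall u : int, - m%:Z <= u <= 0 -> Xsol A0 A1 m G Psi u = Psi u.
  move=> u /andP[h1 h2].
  rewrite (@XY R d A0 A1 m G Psi 0 u); last lia.
  rewrite /Ysol [X in _ + X = _]big_geq // addr0.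
  rewrite Z_init ?mul1mx; last (apply/andP; split; lia).
  have [j hj] : exists j : nat, u = - j%:Z by exists (absz u); lia.
  subst u.
  have hjm : (j <= m)%N by lia.
  rewrite (big_cat_nat _ (n:= m - j)) //=; last lia.
  rewrite [X in _ + (_ + X)]big1_seq ?addr0; last first.
    move=> k /andP[_]; rewrite mem_index_iota => /andP[hk1 hk2].
    by rewrite Z_lt ?mul0mx //; lia.
  rewrite (@telescope_sumr_eq _ 0 (m - j) (fun k => Psi (k%:Z - m%:Z))) //=.
    have -> : (m - j)%N%:Z - m%:Z = - j%:Z by lia.
    by rewrite sub0r addrC subrK.
  move=> k hk.
  rewrite Z_init ?mul1mx; last (apply/andP; split; lia).
  rewrite /DeltaM; congr (Psi _ - Psi _); lia.
have solX : solves_ivp A0 A1 m G Psi (Xsol A0 A1 m G Psi).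
  split; last exact: init.
  by case=> [n|n] hn //; rewrite Xs.
split; first exact: solX.
move=> X [hX1 hX2].
suff H : forall w : nat, forall u : int, - m%:Z <= u -> u + m%:Z <= w%:Z ->
    X u = Xsol A0 A1 m G Psi u.
  move=> u hu; apply: (H (absz (u + m%:Z))) => //; lia.
elim=> [|w IH] u hu1 hu2; (case: (leP u 0) => hle; first by rewrite hX2 ?init //; apply/andP; split).
  lia.
have [n hn] : exists n : nat, u = n%:Z + 1 by exists (absz u).-1; lia.
subst u.
have e1 := hX1 n%:Z (le0z_nat n).
have e2 := Xs n.
move: e1 e2; rewrite /DeltaM.
move=> /eqP; rewrite subr_eq => /eqP ->.
move=> /eqP; rewrite subr_eq => /eqP ->.
rewrite !IH //; lia.
Qed.
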